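(* Let $Q_1,Q_2\ge 1$ be integers, $\lambda_1,\lambda_2>0$, $p_{12},p_{21}\in[0,1]$, and set $s=\lambda_1+\lambda_2$, $s_1=\lambda_1+\lambda_2p_{21}$, $s_2=\lambda_2+\lambda_1p_{12}$. Let $\{(n_1(t),n_2(t)):t\ge 0\}$ be the inventory CTMC (defined in the context) started at $(n_1(0),n_2(0))=(Q_1,Q_2)$, and let $p_{(j_1,j_2)}(t)=P(n_1(t)=j_1,n_2(t)=j_2)$. Then for every $t\ge 0$: (a) for $1\le j_1\le Q_1$, $1\le j_2\le Q_2$, with $N=Q_1+Q_2-j_1-j_2$, $$p_{(j_1,j_2)}(t)=e^{-st}\frac{(st)^{N}}{N!}\binom{N}{Q_1-j_1}\Big(\frac{\lambda_1}{s}\Big)^{Q_1-j_1}\Big(\frac{\lambda_2}{s}\Big)^{Q_2-j_2};$$ (b) for $1\le j_1\le Q_1$, $$p_{(j_1,0)}(t)=\sum_{k=Q_1+Q_2-j_1}^{\infty}e^{-st}\frac{(st)^k}{k!}\sum_{l=Q_2}^{Q_1+Q_2-j_1}\binom{l-1}{Q_2-1}\Big(\frac{\lambda_2}{s}\Big)^{Q_2}\Big(\frac{\lambda_1}{s}\Big)^{l-Q_2}\binom{k-l}{Q_1+Q_2-j_1-l}\Big(\frac{s_1}{s}\Big)^{Q_1+Q_2-j_1-l}\Big(\frac{s-s_1}{s}\Big)^{k-Q_1-Q_2+j_1};$$ (c) for $1\le j_2\le Q_2$, $$p_{(0,j_2)}(t)=\sum_{k=Q_1+Q_2-j_2}^{\infty}e^{-st}\frac{(st)^k}{k!}\sum_{l=Q_1}^{Q_1+Q_2-j_2}\binom{l-1}{Q_1-1}\Big(\frac{\lambda_1}{s}\Big)^{Q_1}\Big(\frac{\lambda_2}{s}\Big)^{l-Q_1}\binom{k-l}{Q_1+Q_2-j_2-l}\Big(\frac{s_2}{s}\Big)^{Q_1+Q_2-j_2-l}\Big(\frac{s-s_2}{s}\Big)^{k-Q_1-Q_2+j_2};$$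 (d) $p_{(0,0)}(t)=1-\sum_{(j_1,j_2)\neq(0,0)}p_{(j_1,j_2)}(t)$.
   Context: Two products; customers wanting product $i$ arrive as independent Poisson processes of rate $\lambda_i$; a customer who wants product $i$ and finds it out of stock while product $j\ne i$ is in stock buys one unit of $j$ with probability $p_{ij}$ (otherwise the sale is lost). The inventory CTMC $\{(n_1(t),n_2(t))\}$ (with initial stock $(Q_1,Q_2)$, no replenishment) has state space $\{0,\dots,Q_1\}\times\{0,\dots,Q_2\}$ and transition rates: from $(i_1,i_2)$ with $i_1,i_2\ge1$, to $(i_1-1,i_2)$ at rate $\lambda_1$ and to $(i_1,i_2-1)$ at rate $\lambda_2$; from $(i_1,0)$ with $i_1\ge 1$, to $(i_1-1,0)$ at rate $s_1=\lambda_1+\lambda_2p_{21}$; from $(0,i_2)$ with $i_2\ge1$, to $(0,i_2-1)$ at rate $s_2=\lambda_2+\lambda_1p_{12}$; $(0,0)$ is absorbing. Here $s=\lambda_1+\lambda_2$. *)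

(* Defs.v *)
From Stdlib Require Import Reals Lra Arith Bool.
Open Scope R_scope.

(* Transition rate q((i1,i2) -> (j1,j2)) of the inventory CTMC (off-diagonal). *)
Definition rate (l1 l2 p12 p21 : R) (i1 i2 j1 j2 : nat) : R :=
  let s1 := l1 + l2 * p21 in
  let s2 := l2 + l1 * p12 in
  match i1, i2 with
  | S a1, S a2 =>
      if Nat.eqb j1 a1 && Nat.eqb j2 i2 then l1
      else if Nat.eqb j1 i1 && Nat.eqb j2 a2 then l2 else 0
  | S a1, O => if Nat.eqb j1 a1 && Nat.eqb j2 0 then s1 else 0
  | O, S a2 => if Nat.eqb j1 0 && Nat.eqb j2 a2 then s2 else 0
  | O, O => 0
  end.

Definition state_sum (Q1 Q2 : nat) (f : nat -> nat -> R) : R :=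
  sum_f_R0 (fun i1 => sum_f_R0 (fun i2 => f i1 i2) Q2) Q1.

Definition out_rate (Q1 Q2 : nat) (l1 l2 p12 p21 : R) (i1 i2 : nat) : R :=
  state_sum Q1 Q2 (fun j1 j2 => rate l1 l2 p12 p21 i1 i2 j1 j2).

(* p : j1 -> j2 -> t -> P(n1(t)=j1, n2(t)=j2) is the transient distribution of
   the CTMC started at (Q1,Q2): the solution on [0,oo) of the Kolmogorov forward
   equations with initial condition delta_(Q1,Q2), continuous at 0 from the right. *)
Definition is_transient_distribution (Q1 Q2 : nat) (l1 l2 p12 p21 : R)
    (p : nat -> nat -> R -> R) : Prop :=
  (forall j1 j2, (j1 <= Q1)%nat -> (j2 <= Q2)%nat ->
     p j1 j2 0 = if Nat.eqb j1 Q1 && Nat.eqb j2 Q2 then 1 else 0) /\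
  (forall j1 j2, (j1 <= Q1)%nat -> (j2 <= Q2)%nat ->
     forall eps, 0 < eps -> exists delta, 0 < delta /\
       forall h, 0 <= h < delta -> Rabs (p j1 j2 h - p j1 j2 0) < eps) /\
  (forall j1 j2, (j1 <= Q1)%nat -> (j2 <= Q2)%nat ->
     forall t, 0 < t ->
       derivable_pt_lim (p j1 j2) t
         (state_sum Q1 Q2 (fun i1 i2 => p i1 i2 t * rate l1 l2 p12 p21 i1 i2 j1 j2)
          - p j1 j2 t * out_rate Q1 Q2 l1 l2 p12 p21 j1 j2)).

(* Main.v *)
Require Import Defs.
From Stdlib Require Import Reals Arith Bool Lra Lia.
From Coquelicot Require Import Coquelicot.
From Stdlib Require Import Binomial FunctionalExtensionality.
Open Scope R_scope.

Ltac eqbs := repeat match goal with |- context [Nat.eqb ?a ?b] => destruct (Nat.eqb_spec a b) end;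
  simpl in *; try (exfalso; lia); try lra.

Lemma sum_delta (g : nat -> R) (a N : nat) :
  sum_f_R0 (fun i => if Nat.eqb i a then g i else 0) N = if Nat.leb a N then g a else 0.
Proof.
  induction N as [|N IH]; cbn [sum_f_R0].
  - destruct (Nat.eqb_spec 0 a); destruct (Nat.leb_spec a 0); subst; try lia; auto.
  - rewrite IH. destruct (Nat.eqb_spec (S N) a); destruct (Nat.leb_spec a N);
      destruct (Nat.leb_spec a (S N)); subst; try lia; lra.
Qed.

Lemma state_sum_ext Q1 Q2 f g :
  (forall i1 i2, (i1 <= Q1)%nat -> (i2 <= Q2)%nat -> f i1 i2 = g i1 i2) ->
  state_sum Q1 Q2 f = state_sum Q1 Q2 g.
Proof.
  intros H; unfold state_sum; apply sum_eq; intros; apply sum_eq; intros; auto.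
Qed.

Lemma state_sum_delta Q1 Q2 (f : nat -> nat -> R) a b :
  state_sum Q1 Q2 (fun i1 i2 => if Nat.eqb i1 a && Nat.eqb i2 b then f i1 i2 else 0)
  = if Nat.leb a Q1 && Nat.leb b Q2 then f a b else 0.
Proof.
  unfold state_sum.
  rewrite (sum_eq _ (fun i1 => if Nat.eqb i1 a then (if Nat.leb b Q2 then f i1 b else 0) else 0)).
  - rewrite sum_delta. destruct (Nat.leb a Q1); simpl; auto.
  - intros i1 _. destruct (Nat.eqb i1 a); simpl.
    + apply (sum_delta (fun i2 => f i1 i2)).
    + clear. induction Q2; cbn [sum_f_R0]; auto. rewrite IHQ2; lra.
Qed.

Lemma state_sum_plus Q1 Q2 f g :
  state_sum Q1 Q2 (fun i1 i2 => f i1 i2 + g i1 i2) = state_sum Q1 Q2 f + state_sum Q1 Q2 g.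
Proof.
  unfold state_sum. rewrite <- sum_plus. apply sum_eq; intros. apply sum_plus.
Qed.

Lemma state_sum_scal Q1 Q2 f c :
  state_sum Q1 Q2 (fun i1 i2 => f i1 i2 * c) = state_sum Q1 Q2 f * c.
Proof.
  unfold state_sum. rewrite Rmult_comm, scal_sum. apply sum_eq; intros.
  rewrite Rmult_comm, scal_sum. reflexivity.
Qed.

Lemma state_sum_zero Q1 Q2 : state_sum Q1 Q2 (fun _ _ => 0) = 0.
Proof.
  transitivity (state_sum Q1 Q2 (fun _ _ => 0) * 0); [|ring].
  rewrite <- state_sum_scal. apply state_sum_ext; intros; ring.
Qed.

Lemma sum_swap (f : nat -> nat -> R) N M :
  sum_f_R0 (fun a => sum_f_R0 (fun b => f a b) M) N =
  sum_f_R0 (fun b => sum_f_R0 (fun a => f a b) N) M.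
Proof.
  induction N as [|N IH]; cbn [sum_f_R0]; auto.
  rewrite IH, <- sum_plus. reflexivity.
Qed.

Lemma state_sum_swap Q1 Q2 (g : nat -> nat -> nat -> nat -> R) :
  state_sum Q1 Q2 (fun i1 i2 => state_sum Q1 Q2 (fun j1 j2 => g i1 i2 j1 j2)) =
  state_sum Q1 Q2 (fun j1 j2 => state_sum Q1 Q2 (fun i1 i2 => g i1 i2 j1 j2)).
Proof.
  unfold state_sum.
  transitivity (sum_f_R0 (fun i1 => sum_f_R0 (fun j1 => sum_f_R0 (fun i2 =>
       sum_f_R0 (fun j2 => g i1 i2 j1 j2) Q2) Q2) Q1) Q1).
  { apply sum_eq; intros. apply sum_swap. }
  rewrite sum_swap. apply sum_eq; intros j1 _.
  transitivity (sum_f_R0 (fun i1 => sum_f_R0 (fun j2 => sum_f_R0 (fun i2 => g i1 i2 j1 j2) Q2) Q2) Q1).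
  { apply sum_eq; intros; apply sum_swap. }
  apply sum_swap.
Qed.

Lemma sum_nonneg (f : nat -> R) N : (forall i, (i <= N)%nat -> 0 <= f i) -> 0 <= sum_f_R0 f N.
Proof.
  induction N; cbn [sum_f_R0]; intros H. apply H; lia.
  assert (0 <= f (S N)) by (apply H; lia). assert (0 <= sum_f_R0 f N) by (apply IHN; intros; apply H; lia). lra.
Qed.

Lemma sum_le_term (f : nat -> R) N a : (forall i, (i <= N)%nat -> 0 <= f i) -> (a <= N)%nat -> f a <= sum_f_R0 f N.
Proof.
  induction N; cbn [sum_f_R0]; intros H Ha.
  - replace a with 0%nat by lia; lra.
  - assert (0 <= f (S N)) by (apply H; lia). assert (0 <= sum_f_R0 f N) by (apply sum_nonneg; intros; apply H; lia).
    destruct (Nat.eq_dec a (S N)). subst; lra.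
    assert (f a <= sum_f_R0 f N) by (apply IHN; [intros; apply H; lia| lia]). lra.
Qed.

Lemma state_sum_nonneg Q1 Q2 f : (forall i1 i2, (i1 <= Q1)%nat -> (i2 <= Q2)%nat -> 0 <= f i1 i2) -> 0 <= state_sum Q1 Q2 f.
Proof.
  intros H; unfold state_sum; apply sum_nonneg; intros; apply sum_nonneg; intros; auto.
Qed.

Lemma state_sum_le_term Q1 Q2 f a b : (forall i1 i2, (i1 <= Q1)%nat -> (i2 <= Q2)%nat -> 0 <= f i1 i2) ->
  (a <= Q1)%nat -> (b <= Q2)%nat -> f a b <= state_sum Q1 Q2 f.
Proof.
  intros H Ha Hb; unfold state_sum.
  apply Rle_trans with (sum_f_R0 (fun i2 => f a i2) Q2).
  - apply (sum_le_term (fun i2 => f a i2)); auto.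
  - apply (sum_le_term (fun i1 => sum_f_R0 (fun i2 => f i1 i2) Q2)); auto.
    intros; apply sum_nonneg; auto.
Qed.


Lemma ode_unique (g f h : R -> R) (c : R) :
  g 0 = f 0 ->
  (forall eps, 0 < eps -> exists delta, 0 < delta /\ forall x, 0 <= x < delta -> Rabs (g x - g 0) < eps) ->
  (forall eps, 0 < eps -> exists delta, 0 < delta /\ forall x, 0 <= x < delta -> Rabs (f x - f 0) < eps) ->
  (forall t, 0 < t -> derivable_pt_lim g t (h t - g t * c)) ->
  (forall t, 0 < t -> derivable_pt_lim f t (h t - f t * c)) ->
  forall t, 0 <= t -> g t = f t.
Proof.
  intros H0 Hg Hf Dg Df t Ht.
  destruct (Req_dec t 0) as [->|Htn]; auto.
  assert (Htp : 0 < t) by lra.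
  set (u := fun x => (g x - f x) * exp (c * x)).
  assert (Du : forall x, 0 < x -> derivable_pt_lim u x 0).
  { intros x Hx. apply is_derive_Reals.
    assert (Hd1 : is_derive (fun x => g x - f x) x ((h x - g x * c) - (h x - f x * c))).
    { apply (is_derive_minus g f). apply is_derive_Reals, Dg; auto. apply is_derive_Reals, Df; auto. }
    assert (Hd2 : is_derive (fun x => exp (c * x)) x (c * exp (c * x))).
    { auto_derive; auto. ring. }
    pose proof (is_derive_mult _ _ _ _ _ Hd1 Hd2 Rmult_comm) as Hd.
    eapply is_derive_ext. { intros; reflexivity. }
    replace (0 : R) with (plus (mult ((h x - g x * c) - (h x - f x * c)) (exp (c * x))) (mult (g x - f x) (c * exp (c * x)))).
    exact Hd. change (plus ?x ?y) with (x + y). change (mult ?x ?y) with (x * y).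
    match goal with |- ?x = ?y => change (@eq R x y) end. ring. }
  assert (Hconst : forall a, 0 < a < t -> u t = u a).
  { intros a Ha. destruct (MVT_cor2 u (fun _ => 0) a t) as [x [Hx1 Hx2]]; try lra.
    intros x Hx. apply Du. lra. }
  assert (Hut : u t = 0).
  { destruct (Req_dec (u t) 0) as [E|E]; auto. exfalso.
    set (K := exp (Rabs c * t)). assert (HK : 0 < K) by apply exp_pos.
    set (eps := Rabs (u t) / (4 * K)).
    assert (Heps : 0 < eps). { unfold eps. apply Rdiv_lt_0_compat. apply Rabs_pos_lt; auto. lra. }
    destruct (Hg eps Heps) as [d1 [Hd1 Hd1']]. destruct (Hf eps Heps) as [d2 [Hd2 Hd2']].
    set (a := Rmin (Rmin d1 d2) t / 2).
    assert (Ha : 0 < a < t /\ a < d1 /\ a < d2).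
    { unfold a. pose proof (Rmin_l (Rmin d1 d2) t). pose proof (Rmin_r (Rmin d1 d2) t).
      pose proof (Rmin_l d1 d2). pose proof (Rmin_r d1 d2).
      assert (0 < Rmin (Rmin d1 d2) t) by (repeat apply Rmin_pos; auto). lra. }
    assert (Hua : u t = u a) by (apply Hconst; lra).
    assert (Hga := Hd1' a ltac:(lra)). assert (Hfa := Hd2' a ltac:(lra)).
    assert (Hb : Rabs (g a - f a) < 2 * eps).
    { replace (g a - f a) with ((g a - g 0) - (f a - f 0)) by (rewrite H0; ring).
      eapply Rle_lt_trans. apply Rabs_triang. rewrite Rabs_Ropp. lra. }
    assert (He : exp (c * a) <= K).
    { unfold K. destruct (Req_dec (c * a) (Rabs c * t)) as [Ee|Ee]. rewrite Ee; lra.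
      left. apply exp_increasing.
      assert (c * a <= Rabs c * a) by (apply Rmult_le_compat_r; [lra| apply RRle_abs]).
      assert (Rabs c * a <= Rabs c * t) by (apply Rmult_le_compat_l; [apply Rabs_pos| lra]). lra. }
    assert (Hu : Rabs (u a) <= 2 * eps * K).
    { unfold u. rewrite Rabs_mult, (Rabs_right (exp _)) by (left; apply exp_pos).
      apply Rmult_le_compat; try apply Rabs_pos; try (left; apply exp_pos); lra. }
    assert (2 * eps * K = Rabs (u t) / 2). { unfold eps. field. lra. }
    assert (0 < Rabs (u t)) by (apply Rabs_pos_lt; auto). rewrite Hua in *. lra. }
  unfold u in Hut. apply Rmult_integral in Hut. destruct Hut as [Hut|Hut]. lra.
  pose proof (exp_pos (c * t)). lra.
Qed.


Lemma C_sym n k : (k <= n)%nat -> C n k = C n (n - k).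
Proof. intros. unfold C. replace (n - (n - k))%nat with k by lia. field.
  split; apply INR_fact_neq_0. Qed.

Lemma C_00 : C 0 0 = 1.
Proof. unfold C. simpl. field. Qed.

Section Binom.
Variables (al be : R).
Definition g n m := C n m * al ^ m * be ^ (n - m).

Lemma g_pascal n m : (S m <= n)%nat -> g (S n) (S m) = al * g n m + be * g n (S m).
Proof.
  intros H. unfold g. rewrite <- (pascal n m) by lia.
  replace (S n - S m)%nat with (S (n - S m)) by lia.
  replace (n - m)%nat with (S (n - S m)) by lia. simpl. ring.
Qed.

Lemma g_zero n : g (S n) 0 = be * g n 0.
Proof. unfold g. rewrite !C_n_0. replace (S n - 0)%nat with (S n) by lia. replace (n - 0)%nat with n by lia. simpl. ring. Qed.

Lemma g_diag n : g n n = al ^ n.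
Proof. unfold g. rewrite C_n_n, Nat.sub_diag. simpl. ring. Qed.

Variable (h : nat -> R) (Q : nat).
Definition Bsum r k := sum_f_R0 (fun i => h i * g (k - Q - i) (r - i)) r.

Lemma B_rec_new r k : (S k = Q + r)%nat ->
  Bsum r (S k) = (match r with O => 0 | S r' => al * Bsum r' k end) + h r.
Proof.
  intros Hk. unfold Bsum. destruct r as [|r'].
  - cbn [sum_f_R0]. replace (S k - Q - 0)%nat with 0%nat by lia. simpl. rewrite g_diag. simpl. ring.
  - cbn [sum_f_R0]. rewrite Nat.sub_diag.
    replace (S k - Q - S r')%nat with 0%nat by lia. rewrite g_diag. rewrite scal_sum.
    f_equal. 2: simpl; ring. apply sum_eq; intros i Hi.
    replace (S k - Q - i)%nat with (S r' - i)%nat by lia. replace (k - Q - i)%nat with (r' - i)%nat by lia.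
    rewrite !g_diag. replace (S r' - i)%nat with (S (r' - i)) by lia. simpl. ring.
Qed.

Lemma B_rec_old r k : (Q + r <= k)%nat ->
  Bsum r (S k) = (match r with O => 0 | S r' => al * Bsum r' k end) + be * Bsum r k.
Proof.
  intros Hk. unfold Bsum. destruct r as [|r'].
  - cbn [sum_f_R0]. replace (S k - Q - 0)%nat with (S (k - Q - 0)) by lia. rewrite Nat.sub_diag, g_zero. ring.
  - cbn [sum_f_R0]. rewrite Nat.sub_diag.
    replace (S k - Q - S r')%nat with (S (k - Q - S r')) by lia. rewrite g_zero.
    rewrite scal_sum. rewrite Rmult_plus_distr_l, scal_sum.
    transitivity (sum_f_R0 (fun i => h i * g (k - Q - i) (r' - i) * al + h i * g (k - Q - i) (S r' - i) * be) r'
                  + be * (h (S r') * g (k - Q - S r') 0)).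
    2:{ rewrite sum_plus. ring. }
    f_equal. 2: ring. apply sum_eq; intros i Hi.
    replace (S k - Q - i)%nat with (S (k - Q - i)) by lia. replace (S r' - i)%nat with (S (r' - i)) by lia.
    rewrite g_pascal by lia. ring.
Qed.
End Binom.

Lemma series_shift (u : nat -> R) l M : is_series u l -> (forall n, (n < M)%nat -> u n = 0) ->
  is_series (fun m => u (m + M)%nat) l.
Proof.
  revert u. induction M; intros u Hu Hz.
  - eapply is_series_ext; [|exact Hu]. intros n. rewrite Nat.add_0_r. reflexivity.
  - assert (Hv : is_series (fun k => u (S k)) l).
    { apply is_series_incr_1. assert (E' : forall L, L = l -> is_series u L) by (intros; subst; exact Hu).
      apply E'. rewrite Hz by lia. change (plus ?x ?y) with (x + y). rewrite Rplus_0_r. reflexivity. }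
    pose proof (IHM _ Hv) as H. eapply is_series_ext; [|apply H].
    + intros n. simpl. rewrite Nat.add_succ_r. reflexivity.
    + intros n Hn. apply Hz. lia.
Qed.

Lemma series_single (u : nat -> R) l M : is_series u l -> (forall n, n <> M -> u n = 0) -> l = u M.
Proof.
  intros Hu Hz.
  pose proof (series_shift u l M Hu (fun n Hn => Hz n ltac:(lia))) as H1.
  set (v := fun m => u (m + M)%nat) in H1.
  assert (H2 : is_series (fun k => v (S k)) (l - v 0%nat)).
  { apply is_series_incr_1. assert (E' : forall L, L = l -> is_series v L) by (intros; subst; exact H1).
    apply E'. change (plus ?x ?y) with (x + y). unfold Rminus. rewrite Rplus_assoc, Rplus_opp_l, Rplus_0_r. reflexivity. }
  assert (H3 : is_series (fun k => v (S k)) 0).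
  { pose proof (is_series_scal_r 0 _ _ H2) as H4. rewrite Rmult_0_r in H4.
    eapply is_series_ext; [|exact H4]. intros n. unfold v. rewrite Rmult_0_r, Hz. reflexivity. lia. }
  apply is_series_unique in H2. apply is_series_unique in H3. rewrite H2 in H3.
  unfold v in H3. simpl in H3. lra.
Qed.

Section Chain.
Variables (Q1 Q2 : nat) (l1 l2 p12 p21 : R).
Hypotheses (hl1 : 0 < l1) (hl2 : 0 < l2) (hp12 : 0 <= p12 <= 1) (hp21 : 0 <= p21 <= 1).

Definition ss := l1 + l2.
Definition s1 := l1 + l2 * p21.
Definition s2 := l2 + l1 * p12.
Definition rt := rate l1 l2 p12 p21.
Definition out := out_rate Q1 Q2 l1 l2 p12 p21.

Lemma ss_pos : 0 < ss. Proof. unfold ss; lra. Qed.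
Lemma s1_bounds : 0 < s1 <= ss. Proof. unfold s1, ss. nra. Qed.
Lemma s2_bounds : 0 < s2 <= ss. Proof. unfold s2, ss. nra. Qed.

Lemma rt_in_int i1 i2 j1 j2 : (1 <= j1)%nat -> (1 <= j2)%nat ->
  rt i1 i2 j1 j2 = (if Nat.eqb i1 (S j1) && Nat.eqb i2 j2 then l1 else 0)
                 + (if Nat.eqb i1 j1 && Nat.eqb i2 (S j2) then l2 else 0).
Proof.
  intros H1 H2. unfold rt, rate.
  destruct i1 as [|a1], i2 as [|a2]; eqbs.
Qed.

Lemma rt_in_b1 i1 i2 j1 : (1 <= j1)%nat ->
  rt i1 i2 j1 0 = (if Nat.eqb i1 (S j1) && Nat.eqb i2 0 then s1 else 0)
                 + (if Nat.eqb i1 j1 && Nat.eqb i2 1 then l2 else 0).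
Proof.
  intros H1. unfold rt, rate, s1.
  destruct i1 as [|a1], i2 as [|a2]; eqbs.
Qed.

Lemma rt_in_b2 i1 i2 j2 : (1 <= j2)%nat ->
  rt i1 i2 0 j2 = (if Nat.eqb i1 0 && Nat.eqb i2 (S j2) then s2 else 0)
                 + (if Nat.eqb i1 1 && Nat.eqb i2 j2 then l1 else 0).
Proof.
  intros H1. unfold rt, rate, s2.
  destruct i1 as [|a1], i2 as [|a2]; eqbs.
Qed.

Lemma rt_nonneg i1 i2 j1 j2 : 0 <= rt i1 i2 j1 j2.
Proof.
  pose proof s1_bounds; pose proof s2_bounds.
  unfold rt, rate; fold s1 s2.
  destruct i1 as [|a1], i2 as [|a2]; eqbs.
Qed.

Lemma rt_level i1 i2 j1 j2 : rt i1 i2 j1 j2 <> 0 -> (i1 + i2 = S (j1 + j2))%nat.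
Proof.
  unfold rt, rate.
  destruct i1 as [|a1], i2 as [|a2]; eqbs; intros; lia.
Qed.

Lemma out_int a1 a2 : (S a1 <= Q1)%nat -> (S a2 <= Q2)%nat -> out (S a1) (S a2) = ss.
Proof.
  intros H1 H2. unfold out, out_rate.
  rewrite (state_sum_ext _ _ _ (fun j1 j2 => (if Nat.eqb j1 a1 && Nat.eqb j2 (S a2) then l1 else 0)
     + (if Nat.eqb j1 (S a1) && Nat.eqb j2 a2 then l2 else 0))).
  - rewrite state_sum_plus, !state_sum_delta.
    destruct (Nat.leb_spec a1 Q1), (Nat.leb_spec (S a2) Q2), (Nat.leb_spec (S a1) Q1), (Nat.leb_spec a2 Q2);
      try lia; simpl; unfold ss; lra.
  - intros. unfold rate. eqbs.
Qed.

Lemma out_b1 a1 : (S a1 <= Q1)%nat -> out (S a1) 0 = s1.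
Proof.
  intros H1. unfold out, out_rate. unfold rate. fold s1.
  rewrite (state_sum_delta Q1 Q2 (fun _ _ => s1)).
  destruct (Nat.leb_spec a1 Q1), (Nat.leb_spec 0 Q2); try lia; reflexivity.
Qed.

Lemma out_b2 a2 : (S a2 <= Q2)%nat -> out 0 (S a2) = s2.
Proof.
  intros H1. unfold out, out_rate. unfold rate. fold s2.
  rewrite (state_sum_delta Q1 Q2 (fun _ _ => s2)).
  destruct (Nat.leb_spec 0 Q1), (Nat.leb_spec a2 Q2); try lia; reflexivity.
Qed.

Lemma out_00 : out 0 0 = 0.
Proof. unfold out, out_rate, rate. apply state_sum_zero. Qed.

Lemma out_le i1 i2 : (i1 <= Q1)%nat -> (i2 <= Q2)%nat -> out i1 i2 <= ss.
Proof.
  pose proof s1_bounds; pose proof s2_bounds; pose proof ss_pos.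
  intros. destruct i1 as [|a1], i2 as [|a2].
  - rewrite out_00; lra.
  - rewrite out_b2; auto; lra.
  - rewrite out_b1; auto; lra.
  - rewrite out_int; auto; lra.
Qed.

Definition P i1 i2 j1 j2 :=
  rt i1 i2 j1 j2 / ss + (if Nat.eqb i1 j1 && Nat.eqb i2 j2 then 1 - out j1 j2 / ss else 0).

Fixpoint pi (k : nat) (j1 j2 : nat) : R :=
  match k with
  | O => if Nat.eqb j1 Q1 && Nat.eqb j2 Q2 then 1 else 0
  | S k => state_sum Q1 Q2 (fun i1 i2 => pi k i1 i2 * P i1 i2 j1 j2)
  end.

Lemma P_nonneg i1 i2 j1 j2 : (i1 <= Q1)%nat -> (i2 <= Q2)%nat -> 0 <= P i1 i2 j1 j2.
Proof.
  intros. unfold P. pose proof ss_pos. pose proof (rt_nonneg i1 i2 j1 j2).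
  assert (0 <= rt i1 i2 j1 j2 / ss) by (apply Rdiv_le_0_compat; lra).
  destruct (Nat.eqb_spec i1 j1), (Nat.eqb_spec i2 j2); simpl; try lra. subst.
  pose proof (out_le j1 j2 H H0).
  assert (out j1 j2 / ss <= 1). { unfold Rdiv. apply Rle_trans with (ss * /ss).
    apply Rmult_le_compat_r. left; apply Rinv_0_lt_compat; lra. lra. rewrite Rinv_r; lra. } lra.
Qed.

Lemma P_row i1 i2 : (i1 <= Q1)%nat -> (i2 <= Q2)%nat -> state_sum Q1 Q2 (fun j1 j2 => P i1 i2 j1 j2) = 1.
Proof.
  intros. unfold P. rewrite state_sum_plus.
  unfold Rdiv at 1. rewrite state_sum_scal.
  rewrite (state_sum_ext _ _ (fun j1 j2 => if Nat.eqb i1 j1 && Nat.eqb i2 j2 then 1 - out j1 j2 / ss else 0) (fun j1 j2 => if Nat.eqb j1 i1 && Nat.eqb j2 i2 then 1 - out j1 j2 / ss else 0)).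
  - rewrite state_sum_delta. destruct (Nat.leb_spec i1 Q1), (Nat.leb_spec i2 Q2); try lia; simpl.
    change (state_sum Q1 Q2 (rt i1 i2)) with (out i1 i2). pose proof ss_pos. field. lra.
  - intros. rewrite (Nat.eqb_sym i1), (Nat.eqb_sym i2). reflexivity.
Qed.

Lemma pi_nonneg k j1 j2 : 0 <= pi k j1 j2.
Proof.
  revert j1 j2; induction k; intros; simpl.
  - destruct (_ && _); lra.
  - apply state_sum_nonneg; intros. apply Rmult_le_pos; auto. apply P_nonneg; auto.
Qed.

Lemma pi_sum k : state_sum Q1 Q2 (pi k) = 1.
Proof.
  induction k.
  - simpl. rewrite (state_sum_delta Q1 Q2 (fun _ _ => 1)).
    destruct (Nat.leb_spec Q1 Q1), (Nat.leb_spec Q2 Q2); try lia; reflexivity.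
  - simpl. rewrite <- state_sum_swap.
    rewrite <- IHk. apply state_sum_ext; intros.
    rewrite (state_sum_ext _ _ _ (fun j1 j2 => P i1 i2 j1 j2 * pi k i1 i2)).
    rewrite state_sum_scal, P_row; auto; ring.
    intros; ring.
Qed.

Lemma pi_le1 k j1 j2 : (j1 <= Q1)%nat -> (j2 <= Q2)%nat -> pi k j1 j2 <= 1.
Proof.
  intros. rewrite <- (pi_sum k). apply (state_sum_le_term Q1 Q2 (pi k)); auto.
  intros; apply pi_nonneg.
Qed.


Lemma is_series_sum_f (f : nat -> nat -> R) (l : nat -> R) N :
  (forall i, (i <= N)%nat -> is_series (f i) (l i)) ->
  is_series (fun n => sum_f_R0 (fun i => f i n) N) (sum_f_R0 l N).
Proof.
  induction N; intros H; cbn [sum_f_R0].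
  - apply H; lia.
  - apply (is_series_plus (fun n => sum_f_R0 (fun i => f i n) N) (f (S N))).
    apply IHN; intros; apply H; lia. apply H; lia.
Qed.

Lemma is_series_state_sum (f : nat -> nat -> nat -> R) (l : nat -> nat -> R) :
  (forall i1 i2, (i1 <= Q1)%nat -> (i2 <= Q2)%nat -> is_series (f i1 i2) (l i1 i2)) ->
  is_series (fun n => state_sum Q1 Q2 (fun i1 i2 => f i1 i2 n)) (state_sum Q1 Q2 l).
Proof.
  intros H. unfold state_sum.
  apply (is_series_sum_f (fun i1 n => sum_f_R0 (fun i2 => f i1 i2 n) Q2)).
  intros i1 Hi1. apply (is_series_sum_f (fun i2 n => f i1 i2 n)). intros; auto.
Qed.

Lemma pow_n_pow' (x : R) k : @pow_n (AbsRing.Ring R_AbsRing) x k = x ^ k.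
Proof. induction k; simpl; [reflexivity|]. rewrite IHk. reflexivity. Qed.

Definition a j1 j2 n := ss ^ n / INR (fact n) * pi n j1 j2.
Definition F j1 j2 t := exp (- (ss * t)) * PSeries (a j1 j2) t.

Lemma a_bound j1 j2 n r : (j1 <= Q1)%nat -> (j2 <= Q2)%nat ->
  Rabs (a j1 j2 n * r ^ n) <= / INR (fact n) * (ss * Rabs r) ^ n.
Proof.
  intros. unfold a. pose proof ss_pos. pose proof (pi_nonneg n j1 j2). pose proof (pi_le1 n j1 j2 H H0).
  rewrite Rabs_mult, <- RPow_abs, Rpow_mult_distr.
  assert (0 <= ss ^ n / INR (fact n) * pi n j1 j2).
  { apply Rmult_le_pos; auto. apply Rdiv_le_0_compat. apply pow_le; lra. apply lt_0_INR, lt_O_fact. }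
  rewrite (Rabs_right (ss ^ n / INR (fact n) * pi n j1 j2)) by lra.
  assert (0 <= Rabs r ^ n) by (apply pow_le, Rabs_pos).
  assert (0 <= ss ^ n / INR (fact n)).
  { apply Rdiv_le_0_compat. apply pow_le; lra. apply lt_0_INR, lt_O_fact. }
  replace (/ INR (fact n) * (ss ^ n * Rabs r ^ n)) with (ss ^ n / INR (fact n) * 1 * Rabs r ^ n) by (unfold Rdiv; ring).
  apply Rmult_le_compat_r; auto. apply Rmult_le_compat_l; auto.
Qed.

Lemma a_radius j1 j2 x : (j1 <= Q1)%nat -> (j2 <= Q2)%nat -> Rbar_lt (Rabs x) (CV_radius (a j1 j2)).
Proof.
  intros. assert (Hd : forall r, CV_disk (a j1 j2) r).
  { intros r. unfold CV_disk.
    apply (@ex_series_le R_AbsRing R_CompleteNormedModule _ (fun n => / INR (fact n) * (ss * Rabs r) ^ n)).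
    - intros n. change (norm ?x) with (Rabs x). rewrite Rabs_Rabsolu. apply a_bound; auto.
    - pose proof (is_exp_Reals (ss * Rabs r)) as He. exists (exp (ss * Rabs r)).
      eapply is_series_ext; [|exact He]. intros n; simpl. rewrite pow_n_pow. change (scal ?x ?y) with (x * y). ring. }
  apply Rbar_lt_le_trans with (Finite (Rabs x + 1)). simpl; lra.
  unfold CV_radius. destruct (Lub_Rbar_correct (CV_disk (a j1 j2))) as [Hub _]. apply Hub, Hd.
Qed.

Lemma ps_F j1 j2 t : (j1 <= Q1)%nat -> (j2 <= Q2)%nat ->
  is_series (fun n => t ^ n * a j1 j2 n) (PSeries (a j1 j2) t).
Proof.
  intros. pose proof (PSeries_correct (a j1 j2) t (CV_radius_inside _ _ (a_radius j1 j2 t H H0))) as Hp.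
  eapply is_series_ext; [|exact Hp]. intros n. rewrite pow_n_pow. reflexivity.
Qed.

Lemma F_series j1 j2 t : (j1 <= Q1)%nat -> (j2 <= Q2)%nat ->
  is_series (fun n => exp (- (ss * t)) * (ss * t) ^ n / INR (fact n) * pi n j1 j2) (F j1 j2 t).
Proof.
  intros. pose proof (is_series_scal (exp (- (ss * t))) _ _ (ps_F j1 j2 t H H0)) as Hs.
  eapply is_series_ext; [|exact Hs]. intros n. change (scal ?x ?y) with (x * y). unfold a.
  match goal with |- ?x = ?y => change (@eq R x y) end.
  rewrite Rpow_mult_distr. unfold Rdiv. ring.
Qed.

Lemma F_0 j1 j2 : F j1 j2 0 = pi 0 j1 j2.
Proof. unfold F. rewrite PSeries_0. unfold a. rewrite Rmult_0_r, Ropp_0, exp_0. simpl. field. Qed.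

Lemma PS_derive_a j1 j2 n : PS_derive (a j1 j2) n = ss * state_sum Q1 Q2 (fun i1 i2 => a i1 i2 n * P i1 i2 j1 j2).
Proof.
  unfold PS_derive, a. cbn [pi].
  replace (fun i1 i2 => ss ^ n / INR (fact n) * pi n i1 i2 * P i1 i2 j1 j2)
    with (fun i1 i2 => pi n i1 i2 * P i1 i2 j1 j2 * (ss ^ n / INR (fact n))).
  2:{ apply functional_extensionality; intro; apply functional_extensionality; intro; ring. }
  rewrite state_sum_scal. rewrite fact_simpl, mult_INR.
  pose proof (INR_fact_neq_0 n). assert (INR (S n) <> 0) by (apply not_0_INR; lia).
  simpl pow. field. auto.
Qed.

Lemma F_deriv j1 j2 t : (j1 <= Q1)%nat -> (j2 <= Q2)%nat ->
  derivable_pt_lim (F j1 j2) t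
    (state_sum Q1 Q2 (fun i1 i2 => F i1 i2 t * rt i1 i2 j1 j2) - F j1 j2 t * out j1 j2).
Proof.
  intros Hj1 Hj2. apply is_derive_Reals.
  assert (H1 : is_derive (fun t => exp (- (ss * t))) t (- ss * exp (- (ss * t)))).
  { auto_derive; auto. ring. }
  pose proof (is_derive_PSeries (a j1 j2) t (a_radius j1 j2 t Hj1 Hj2)) as H2.
  pose proof (is_derive_mult _ _ _ _ _ H1 H2 Rmult_comm) as H3.
  assert (HV : PSeries (PS_derive (a j1 j2)) t
     = ss * state_sum Q1 Q2 (fun i1 i2 => PSeries (a i1 i2) t * P i1 i2 j1 j2)).
  { apply is_pseries_unique.
    assert (Hx : forall i1 i2, (i1 <= Q1)%nat -> (i2 <= Q2)%nat ->
       is_series (fun n => t ^ n * a i1 i2 n * P i1 i2 j1 j2) (PSeries (a i1 i2) t * P i1 i2 j1 j2)).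
    { intros. apply is_series_scal_r. apply ps_F; auto. }
    pose proof (is_series_state_sum (fun i1 i2 n => t ^ n * a i1 i2 n * P i1 i2 j1 j2) _ Hx) as Hs0.
    pose proof (is_series_scal ss _ _ Hs0) as Hs.
    eapply is_series_ext; [|exact Hs]. intros n. cbv beta.
    change (scal ?x ?y) with (x * y).
    rewrite (pow_n_pow' t n).
    rewrite PS_derive_a.
    match goal with |- ?x = ?y => change (@eq R x y) end.
    replace (fun i1 i2 => t ^ n * a i1 i2 n * P i1 i2 j1 j2)
      with (fun i1 i2 => a i1 i2 n * P i1 i2 j1 j2 * t ^ n).
    2:{ apply functional_extensionality; intro; apply functional_extensionality; intro; ring. }
    rewrite state_sum_scal. ring. }
  eapply is_derive_ext. { intros; reflexivity. }
  replace (state_sum Q1 Q2 (fun i1 i2 => F i1 i2 t * rt i1 i2 j1 j2) - F j1 j2 t * out j1 j2)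
    with (plus (mult (- ss * exp (- (ss * t))) (PSeries (a j1 j2) t))
               (mult (exp (- (ss * t))) (PSeries (PS_derive (a j1 j2)) t))).
  { exact H3. }
  change (plus ?x ?y) with (x + y). change (mult ?x ?y) with (x * y).
  match goal with |- ?x = ?y => change (@eq R x y) end.
  rewrite HV.
  transitivity (- ss * F j1 j2 t + ss * state_sum Q1 Q2 (fun i1 i2 => F i1 i2 t * P i1 i2 j1 j2)).
  { unfold F. replace (fun i1 i2 => exp (- (ss * t)) * PSeries (a i1 i2) t * P i1 i2 j1 j2)
      with (fun i1 i2 => PSeries (a i1 i2) t * P i1 i2 j1 j2 * exp (- (ss * t))).
    2:{ apply functional_extensionality; intro; apply functional_extensionality; intro; ring. }
    rewrite state_sum_scal. ring. }
  unfold P.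
  replace (fun i1 i2 => F i1 i2 t * (rt i1 i2 j1 j2 / ss + (if (i1 =? j1) && (i2 =? j2) then 1 - out j1 j2 / ss else 0)))
    with (fun i1 i2 => F i1 i2 t * rt i1 i2 j1 j2 * / ss + (if (i1 =? j1) && (i2 =? j2) then F i1 i2 t * (1 - out j1 j2 / ss) else 0)).
  2:{ apply functional_extensionality; intro; apply functional_extensionality; intro.
      destruct (_ && _); unfold Rdiv; ring. }
  rewrite state_sum_plus, state_sum_scal, state_sum_delta.
  destruct (Nat.leb_spec j1 Q1), (Nat.leb_spec j2 Q2); try lia. simpl.
  pose proof ss_pos. field. lra.
Qed.

Lemma F_cont0 j1 j2 : (j1 <= Q1)%nat -> (j2 <= Q2)%nat ->
  forall eps, 0 < eps -> exists delta, 0 < delta /\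
       forall h, 0 <= h < delta -> Rabs (F j1 j2 h - F j1 j2 0) < eps.
Proof.
  intros Hj1 Hj2 eps He.
  assert (Hc : continuity_pt (F j1 j2) 0).
  { apply derivable_continuous_pt. exists (state_sum Q1 Q2 (fun i1 i2 => F i1 i2 0 * rt i1 i2 j1 j2) - F j1 j2 0 * out j1 j2).
    apply F_deriv; auto. }
  destruct (Hc eps He) as [d [Hd Hd']].
  exists d; split; auto. intros h Hh.
  destruct (Req_dec h 0) as [->|Hn]. { rewrite Rminus_eq_0, Rabs_R0; lra. }
  apply (Hd' h). split. split. constructor. auto.
  simpl. unfold R_dist. rewrite Rminus_0_r, Rabs_right; lra.
Qed.

Lemma p_eq_F (p : nat -> nat -> R -> R) :
  is_transient_distribution Q1 Q2 l1 l2 p12 p21 p ->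
  forall j1 j2, (j1 <= Q1)%nat -> (j2 <= Q2)%nat -> forall t, 0 <= t -> p j1 j2 t = F j1 j2 t.
Proof.
  intros [H0 [Hc Hd]].
  assert (Main : forall n j1 j2, (j1 <= Q1)%nat -> (j2 <= Q2)%nat -> (Q1 + Q2 - (j1 + j2) < n)%nat ->
     forall t, 0 <= t -> p j1 j2 t = F j1 j2 t).
  { induction n as [|n IH]; intros j1 j2 Hj1 Hj2 Hn. lia.
    apply (ode_unique (p j1 j2) (F j1 j2) (fun t => state_sum Q1 Q2 (fun i1 i2 => p i1 i2 t * rt i1 i2 j1 j2)) (out j1 j2)).
    - rewrite F_0, H0; auto.
    - apply Hc; auto.
    - apply F_cont0; auto.
    - intros t Ht. apply Hd; auto.
    - intros t Ht. pose proof (F_deriv j1 j2 t Hj1 Hj2) as D.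
      replace (state_sum Q1 Q2 (fun i1 i2 => p i1 i2 t * rt i1 i2 j1 j2))
        with (state_sum Q1 Q2 (fun i1 i2 => F i1 i2 t * rt i1 i2 j1 j2)). exact D.
      apply state_sum_ext; intros i1 i2 Hi1 Hi2.
      destruct (Req_dec (rt i1 i2 j1 j2) 0) as [E|E]. rewrite E; ring.
      apply rt_level in E. rewrite IH; auto. lia. lra. }
  intros. apply (Main (S (Q1 + Q2 - (j1 + j2)))); auto.
Qed.

Definition cA (A B : nat) := C (A + B) A * (l1 / ss) ^ A * (l2 / ss) ^ B.

Lemma cA_rec A B : (1 <= A + B)%nat ->
  cA A B = (if Nat.leb 1 A then cA (A - 1) B * (l1 / ss) else 0)
         + (if Nat.leb 1 B then cA A (B - 1) * (l2 / ss) else 0).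
Proof.
  intros H. unfold cA. destruct A as [|a], B as [|b]; simpl Nat.leb; cbv iota.
  - lia.
  - rewrite !Nat.add_0_l, !C_n_0. replace (S b - 1)%nat with b by lia. simpl. ring.
  - rewrite !Nat.add_0_r, !C_n_n. replace (S a - 1)%nat with a by lia. simpl. ring.
  - replace (S a - 1)%nat with a by lia. replace (S b - 1)%nat with b by lia.
    replace (a + S b)%nat with (a + S b)%nat by lia.
    replace (S a + b)%nat with (a + S b)%nat by lia.
    replace (S a + S b)%nat with (S (a + S b)) by lia.
    rewrite <- pascal by lia. simpl. ring.
Qed.

Lemma pi_step k j1 j2 : pi (S k) j1 j2 =
  state_sum Q1 Q2 (fun i1 i2 => pi k i1 i2 * rt i1 i2 j1 j2) / ss
  + (if Nat.leb j1 Q1 && Nat.leb j2 Q2 then pi k j1 j2 * (1 - out j1 j2 / ss) else 0).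
Proof.
  cbn [pi]. unfold P.
  rewrite (state_sum_ext _ _ _ (fun i1 i2 => pi k i1 i2 * rt i1 i2 j1 j2 * / ss
     + (if Nat.eqb i1 j1 && Nat.eqb i2 j2 then pi k i1 i2 * (1 - out j1 j2 / ss) else 0))).
  - rewrite state_sum_plus, state_sum_scal, state_sum_delta. reflexivity.
  - intros. destruct (_ && _); unfold Rdiv; ring.
Qed.

Lemma inflow2 (f : nat -> nat -> R) j1 j2 a b c d x y :
  (forall i1 i2, rt i1 i2 j1 j2 = (if Nat.eqb i1 a && Nat.eqb i2 b then x else 0)
                                + (if Nat.eqb i1 c && Nat.eqb i2 d then y else 0)) ->
  state_sum Q1 Q2 (fun i1 i2 => f i1 i2 * rt i1 i2 j1 j2) =
  (if Nat.leb a Q1 && Nat.leb b Q2 then f a b * x else 0)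
  + (if Nat.leb c Q1 && Nat.leb d Q2 then f c d * y else 0).
Proof.
  intros H.
  rewrite (state_sum_ext _ _ _ (fun i1 i2 => (if Nat.eqb i1 a && Nat.eqb i2 b then f i1 i2 * x else 0)
                                + (if Nat.eqb i1 c && Nat.eqb i2 d then f i1 i2 * y else 0))).
  - rewrite state_sum_plus, !state_sum_delta. reflexivity.
  - intros. rewrite H. destruct (_ && _), (_ && _); ring.
Qed.

Lemma pi_int k j1 j2 : (1 <= j1 <= Q1)%nat -> (1 <= j2 <= Q2)%nat ->
  pi k j1 j2 = if Nat.eqb k ((Q1 - j1) + (Q2 - j2)) then cA (Q1 - j1) (Q2 - j2) else 0.
Proof.
  revert j1 j2. induction k; intros j1 j2 H1 H2.
  - cbn [pi]. destruct (Nat.eqb_spec j1 Q1), (Nat.eqb_spec j2 Q2), (Nat.eqb_spec 0 (Q1 - j1 + (Q2 - j2)));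
      simpl; try lia; try reflexivity.
    subst. rewrite !Nat.sub_diag. unfold cA. simpl. rewrite C_00. ring.
  - rewrite pi_step.
    rewrite (inflow2 (pi k) j1 j2 (S j1) j2 j1 (S j2) l1 l2) by (intros; apply rt_in_int; lia).
    destruct j1 as [|a1]; [lia|]. destruct j2 as [|a2]; [lia|].
    rewrite out_int by lia.
    replace (Nat.leb (S a1) Q1 && Nat.leb (S a2) Q2) with true
      by (destruct (Nat.leb_spec (S a1) Q1), (Nat.leb_spec (S a2) Q2); try lia; reflexivity).
    replace (1 - ss / ss) with 0 by (pose proof ss_pos; field; lra).
    set (A := (Q1 - S a1)%nat). set (B := (Q2 - S a2)%nat).
    assert (E1 : (if Nat.leb (S (S a1)) Q1 && Nat.leb (S a2) Q2 then pi k (S (S a1)) (S a2) * l1 else 0)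
               = if Nat.leb 1 A && Nat.eqb k (A - 1 + B) then cA (A - 1) B * l1 else 0).
    { destruct (Nat.leb_spec (S (S a1)) Q1); destruct (Nat.leb_spec (S a2) Q2); try lia; cbn [andb].
      - rewrite IHk by lia. replace (Q1 - S (S a1))%nat with (A-1)%nat by (unfold A; lia).
        fold B. destruct (Nat.leb_spec 1 A); [|unfold A in *; lia]. cbn [andb].
        destruct (Nat.eqb k (A - 1 + B)); ring.
      - destruct (Nat.leb_spec 1 A); [unfold A in *; lia|]. reflexivity. }
    assert (E2 : (if Nat.leb (S a1) Q1 && Nat.leb (S (S a2)) Q2 then pi k (S a1) (S (S a2)) * l2 else 0)
               = if Nat.leb 1 B && Nat.eqb k (A + (B - 1)) then cA A (B - 1) * l2 else 0).
    { destruct (Nat.leb_spec (S a1) Q1); destruct (Nat.leb_spec (S (S a2)) Q2); try lia; cbn [andb].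
      - rewrite IHk by lia. replace (Q2 - S (S a2))%nat with (B-1)%nat by (unfold B; lia).
        fold A. destruct (Nat.leb_spec 1 B); [|unfold B in *; lia]. cbn [andb].
        destruct (Nat.eqb k (A + (B - 1))); ring.
      - destruct (Nat.leb_spec 1 B); [unfold B in *; lia|]. reflexivity. }
    rewrite E1, E2. clearbody A B.
    destruct (Nat.eqb_spec (S k) (A + B)) as [Hk|Hk].
    + rewrite (cA_rec A B) by lia.
      destruct (Nat.leb_spec 1 A), (Nat.leb_spec 1 B); cbn [andb];
      repeat match goal with |- context [Nat.eqb ?a ?b] => destruct (Nat.eqb_spec a b) end;
      try lia; unfold Rdiv; ring.
    + destruct (Nat.leb_spec 1 A), (Nat.leb_spec 1 B); cbn [andb];
      repeat match goal with |- context [Nat.eqb ?a ?b] => destruct (Nat.eqb_spec a b) end;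
      try lia; unfold Rdiv; ring.
Qed.

Definition h1 i := C (i + Q2 - 1) (Q2 - 1) * (l2 / ss) ^ Q2 * (l1 / ss) ^ i.
Definition h2 i := C (i + Q1 - 1) (Q1 - 1) * (l1 / ss) ^ Q1 * (l2 / ss) ^ i.
Definition B1 r k := Bsum (s1 / ss) ((ss - s1) / ss) h1 Q2 r k.
Definition B2 r k := Bsum (s2 / ss) ((ss - s2) / ss) h2 Q1 r k.

Lemma pow_pred (x : R) n : (1 <= n)%nat -> x ^ n = x ^ (n - 1) * x.
Proof. intros. destruct n as [|m]; [lia|]. simpl. replace (m - 0)%nat with m by lia. ring. Qed.

Lemma hA1 r : (1 <= Q2)%nat -> cA r (Q2 - 1) * (l2 / ss) = h1 r.
Proof.
  intros H. unfold cA, h1. rewrite C_sym by lia.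
  replace (r + (Q2 - 1) - r)%nat with (Q2 - 1)%nat by lia.
  replace (r + Q2 - 1)%nat with (r + (Q2 - 1))%nat by lia.
  rewrite (pow_pred (l2 / ss) Q2 H). ring.
Qed.

Lemma hA2 r : (1 <= Q1)%nat -> cA (Q1 - 1) r * (l1 / ss) = h2 r.
Proof.
  intros H. unfold cA, h2.
  replace (r + Q1 - 1)%nat with (Q1 - 1 + r)%nat by lia.
  rewrite (pow_pred (l1 / ss) Q1 H). ring.
Qed.

Lemma pi_b1 k j1 : (1 <= Q1)%nat -> (1 <= Q2)%nat -> (1 <= j1 <= Q1)%nat ->
  pi k j1 0 = if Nat.leb (Q2 + (Q1 - j1)) k then B1 (Q1 - j1) k else 0.
Proof.
  intros HQ1 HQ2. revert j1. induction k; intros j1 H1.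
  - cbn [pi]. destruct (Nat.eqb_spec 0 Q2); [lia|]. rewrite andb_false_r.
    destruct (Nat.leb_spec (Q2 + (Q1 - j1)) 0); [lia|]. reflexivity.
  - rewrite pi_step.
    rewrite (inflow2 (pi k) j1 0 (S j1) 0 j1 1 s1 l2) by (intros; apply rt_in_b1; lia).
    destruct j1 as [|a1]; [lia|].
    rewrite out_b1 by lia.
    replace (Nat.leb (S a1) Q1 && Nat.leb 0 Q2) with true
      by (destruct (Nat.leb_spec (S a1) Q1), (Nat.leb_spec 0 Q2); try lia; reflexivity).
    set (r := (Q1 - S a1)%nat).
    assert (E1 : (if Nat.leb (S (S a1)) Q1 && Nat.leb 0 Q2 then pi k (S (S a1)) 0 * s1 else 0)
               = if Nat.leb 1 r && Nat.leb (Q2 + (r - 1)) k then B1 (r - 1) k * s1 else 0).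
    { destruct (Nat.leb_spec (S (S a1)) Q1); destruct (Nat.leb_spec 0 Q2); try lia; cbn [andb].
      - rewrite IHk by lia. replace (Q1 - S (S a1))%nat with (r-1)%nat by (unfold r; lia).
        destruct (Nat.leb_spec 1 r); [|unfold r in *; lia]. cbn [andb].
        destruct (Nat.leb (Q2 + (r - 1)) k); ring.
      - destruct (Nat.leb_spec 1 r); [unfold r in *; lia|]. reflexivity. }
    assert (E2 : (if Nat.leb (S a1) Q1 && Nat.leb 1 Q2 then pi k (S a1) 1 * l2 else 0)
               = if Nat.eqb k (r + (Q2 - 1)) then h1 r * ss else 0).
    { destruct (Nat.leb_spec (S a1) Q1); destruct (Nat.leb_spec 1 Q2); try lia; cbn [andb].
      rewrite pi_int by lia. fold r. destruct (Nat.eqb k (r + (Q2 - 1))); [|ring].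
      rewrite <- hA1 by lia. pose proof ss_pos. field. lra. }
    rewrite E1, E2. rewrite (IHk (S a1)) by lia. fold r. unfold B1 in *. clearbody r.
    pose proof ss_pos.
    destruct (Nat.leb_spec (Q2 + r) (S k)) as [Hk|Hk].
    + destruct (Nat.eq_dec (S k) (Q2 + r)) as [Hk'|Hk'].
      * rewrite B_rec_new by lia.
        destruct (Nat.leb_spec (Q2 + r) k); [lia|].
        destruct (Nat.eqb_spec k (r + (Q2 - 1))); [|lia].
        destruct r as [|r']; cbn [andb Nat.leb].
        -- field. lra.
        -- replace (S r' - 1)%nat with r' by lia.
           destruct (Nat.leb_spec (Q2 + r') k); [|lia]. field. lra.
      * rewrite B_rec_old by lia.
        destruct (Nat.leb_spec (Q2 + r) k); [|lia].
        destruct (Nat.eqb_spec k (r + (Q2 - 1))); [lia|].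
        destruct r as [|r']; cbn [andb Nat.leb].
        -- field. lra.
        -- replace (S r' - 1)%nat with r' by lia.
           destruct (Nat.leb_spec (Q2 + r') k); [|lia]. field. lra.
    + destruct (Nat.leb_spec (Q2 + r) k); [lia|].
      destruct (Nat.eqb_spec k (r + (Q2 - 1))); [lia|].
      destruct (Nat.leb_spec 1 r), (Nat.leb_spec (Q2 + (r - 1)) k); try lia; cbn [andb]; field; lra.
Qed.

Lemma pi_b2 k j2 : (1 <= Q1)%nat -> (1 <= Q2)%nat -> (1 <= j2 <= Q2)%nat ->
  pi k 0 j2 = if Nat.leb (Q1 + (Q2 - j2)) k then B2 (Q2 - j2) k else 0.
Proof.
  intros HQ1 HQ2. revert j2. induction k; intros j2 H2.
  - cbn [pi]. destruct (Nat.eqb_spec 0 Q1); [lia|]. cbn [andb].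
    destruct (Nat.leb_spec (Q1 + (Q2 - j2)) 0); [lia|]. reflexivity.
  - rewrite pi_step.
    rewrite (inflow2 (pi k) 0 j2 0 (S j2) 1 j2 s2 l1) by (intros; apply rt_in_b2; lia).
    destruct j2 as [|a2]; [lia|].
    rewrite out_b2 by lia.
    replace (Nat.leb 0 Q1 && Nat.leb (S a2) Q2) with true
      by (destruct (Nat.leb_spec 0 Q1), (Nat.leb_spec (S a2) Q2); try lia; reflexivity).
    set (r := (Q2 - S a2)%nat).
    assert (E1 : (if Nat.leb 0 Q1 && Nat.leb (S (S a2)) Q2 then pi k 0 (S (S a2)) * s2 else 0)
               = if Nat.leb 1 r && Nat.leb (Q1 + (r - 1)) k then B2 (r - 1) k * s2 else 0).
    { destruct (Nat.leb_spec 0 Q1); destruct (Nat.leb_spec (S (S a2)) Q2); try lia; cbn [andb].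
      - rewrite IHk by lia. replace (Q2 - S (S a2))%nat with (r-1)%nat by (unfold r; lia).
        destruct (Nat.leb_spec 1 r); [|unfold r in *; lia]. cbn [andb].
        destruct (Nat.leb (Q1 + (r - 1)) k); ring.
      - destruct (Nat.leb_spec 1 r); [unfold r in *; lia|]. reflexivity. }
    assert (E2 : (if Nat.leb 1 Q1 && Nat.leb (S a2) Q2 then pi k 1 (S a2) * l1 else 0)
               = if Nat.eqb k ((Q1 - 1) + r) then h2 r * ss else 0).
    { destruct (Nat.leb_spec 1 Q1); destruct (Nat.leb_spec (S a2) Q2); try lia; cbn [andb].
      rewrite pi_int by lia. fold r. destruct (Nat.eqb k (Q1 - 1 + r)); [|ring].
      rewrite <- hA2 by lia. pose proof ss_pos. field. lra. }
    rewrite E1, E2. rewrite (IHk (S a2)) by lia. fold r. unfold B2 in *. clearbody r.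
    pose proof ss_pos.
    destruct (Nat.leb_spec (Q1 + r) (S k)) as [Hk|Hk].
    + destruct (Nat.eq_dec (S k) (Q1 + r)) as [Hk'|Hk'].
      * rewrite B_rec_new by lia.
        destruct (Nat.leb_spec (Q1 + r) k); [lia|].
        destruct (Nat.eqb_spec k (Q1 - 1 + r)); [|lia].
        destruct r as [|r']; cbn [andb Nat.leb].
        -- field. lra.
        -- replace (S r' - 1)%nat with r' by lia.
           destruct (Nat.leb_spec (Q1 + r') k); [|lia]. field. lra.
      * rewrite B_rec_old by lia.
        destruct (Nat.leb_spec (Q1 + r) k); [|lia].
        destruct (Nat.eqb_spec k (Q1 - 1 + r)); [lia|].
        destruct r as [|r']; cbn [andb Nat.leb].
        -- field. lra.
        -- replace (S r' - 1)%nat with r' by lia.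
           destruct (Nat.leb_spec (Q1 + r') k); [|lia]. field. lra.
    + destruct (Nat.leb_spec (Q1 + r) k); [lia|].
      destruct (Nat.eqb_spec k (Q1 - 1 + r)); [lia|].
      destruct (Nat.leb_spec 1 r), (Nat.leb_spec (Q1 + (r - 1)) k); try lia; cbn [andb]; field; lra.
Qed.

Lemma state_sum_p_1 (p : nat -> nat -> R -> R) t :
  is_transient_distribution Q1 Q2 l1 l2 p12 p21 p -> 0 <= t ->
  state_sum Q1 Q2 (fun j1 j2 => p j1 j2 t) = 1.
Proof.
  intros hp Ht.
  rewrite (state_sum_ext _ _ _ (fun j1 j2 => F j1 j2 t)) by (intros; apply p_eq_F; auto).
  set (w := fun n => exp (- (ss * t)) * (ss * t) ^ n / INR (fact n)).
  assert (H1 : is_series (fun n => state_sum Q1 Q2 (fun j1 j2 => w n * pi n j1 j2)) (state_sum Q1 Q2 (fun j1 j2 => F j1 j2 t))).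
  { apply (is_series_state_sum (fun j1 j2 n => w n * pi n j1 j2)). intros. apply F_series; auto. }
  assert (H1' : is_series w (state_sum Q1 Q2 (fun j1 j2 => F j1 j2 t))).
  { eapply is_series_ext; [|exact H1]. intros n. cbv beta.
    match goal with |- ?x = ?y => change (@eq R x y) end.
    rewrite (state_sum_ext _ _ _ (fun j1 j2 => pi n j1 j2 * w n)) by (intros; ring).
    rewrite state_sum_scal, pi_sum. ring. }
  pose proof (is_series_scal (exp (- (ss * t))) _ _ (is_exp_Reals (ss * t))) as He.
  assert (H2 : is_series w (exp (- (ss * t)) * exp (ss * t))).
  { eapply is_series_ext; [|exact He]. intros n. cbv beta. change (scal ?x ?y) with (x * y).
    rewrite (pow_n_pow' (ss * t) n). change (scal ?x ?y) with (x * y). unfold w. match goal with |- ?x = ?y => change (@eq R x y) end.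
    unfold Rdiv. ring. }
  rewrite <- exp_plus, Rplus_opp_l, exp_0 in H2.
  apply is_series_unique in H1'. apply is_series_unique in H2. congruence.
Qed.

Lemma main_in (p : nat -> nat -> R -> R) (hQ1 : (1 <= Q1)%nat) (hQ2 : (1 <= Q2)%nat)
  (hp : is_transient_distribution Q1 Q2 l1 l2 p12 p21 p) :
  let s := l1 + l2 in
  let s1 := l1 + l2 * p21 in
  let s2 := l2 + l1 * p12 in
  forall t, 0 <= t ->
  (forall j1 j2, (1 <= j1 <= Q1)%nat -> (1 <= j2 <= Q2)%nat ->
     let N := (Q1 + Q2 - j1 - j2)%nat in
     p j1 j2 t = exp (- (s * t)) * (s * t) ^ N / INR (fact N)
                 * C N (Q1 - j1) * (l1 / s) ^ (Q1 - j1) * (l2 / s) ^ (Q2 - j2)) /\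
  (forall j1, (1 <= j1 <= Q1)%nat ->
     let M := (Q1 + Q2 - j1)%nat in
     infinite_sum
       (fun m => let k := (m + M)%nat in
          exp (- (s * t)) * (s * t) ^ k / INR (fact k) *
          sum_f_R0 (fun i => let l := (i + Q2)%nat in
              C (l - 1) (Q2 - 1) * (l2 / s) ^ Q2 * (l1 / s) ^ (l - Q2)
              * C (k - l) (M - l) * (s1 / s) ^ (M - l)
              * ((s - s1) / s) ^ (k - M)) (M - Q2))
       (p j1 0%nat t)) /\
  (forall j2, (1 <= j2 <= Q2)%nat ->
     let M := (Q1 + Q2 - j2)%nat in
     infinite_sum
       (fun m => let k := (m + M)%nat in
          exp (- (s * t)) * (s * t) ^ k / INR (fact k) *
          sum_f_R0 (fun i => let l := (i + Q1)%nat in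
              C (l - 1) (Q1 - 1) * (l1 / s) ^ Q1 * (l2 / s) ^ (l - Q1)
              * C (k - l) (M - l) * (s2 / s) ^ (M - l)
              * ((s - s2) / s) ^ (k - M)) (M - Q1))
       (p 0%nat j2 t)) /\
  p 0%nat 0%nat t =
    1 - state_sum Q1 Q2 (fun j1 j2 =>
          if Nat.eqb j1 0 && Nat.eqb j2 0 then 0 else p j1 j2 t).
Proof.
  cbv zeta. change (l1 + l2 * p21) with s1. change (l2 + l1 * p12) with s2. change (l1 + l2) with ss.
  intros t Ht. split; [|split; [|split]].
  -
    intros j1 j2 H1 H2.
    rewrite (p_eq_F p hp j1 j2) by (auto; lia).
    pose proof (F_series j1 j2 t ltac:(lia) ltac:(lia)) as Hs.
    replace (Q1 + Q2 - j1 - j2)%nat with (Q1 - j1 + (Q2 - j2))%nat by lia.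
    rewrite (series_single _ _ (Q1 - j1 + (Q2 - j2)) Hs).
    + rewrite pi_int by lia. rewrite Nat.eqb_refl. unfold cA. ring.
    + intros n Hn. rewrite pi_int by lia. destruct (Nat.eqb_spec n (Q1 - j1 + (Q2 - j2))); [lia|]. ring.
  -
    intros j1 H1. apply is_series_Reals.
    rewrite (p_eq_F p hp j1 0) by (auto; lia).
    pose proof (F_series j1 0 t ltac:(lia) ltac:(lia)) as Hs.
    apply series_shift with (M := (Q1 + Q2 - j1)%nat) in Hs.
    2:{ intros n Hn. rewrite pi_b1 by lia. destruct (Nat.leb_spec (Q2 + (Q1 - j1)) n); [lia|]. ring. }
    eapply is_series_ext; [|exact Hs]. intros m. cbv beta.
    rewrite pi_b1 by lia. destruct (Nat.leb_spec (Q2 + (Q1 - j1)) (m + (Q1 + Q2 - j1))); [|lia].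
    f_equal. unfold B1, Bsum, g.
    replace (Q1 + Q2 - j1 - Q2)%nat with (Q1 - j1)%nat by lia.
    apply sum_eq. intros i Hi. unfold h1.
    replace (i + Q2 - Q2)%nat with i by lia.
    replace (m + (Q1 + Q2 - j1) - (i + Q2))%nat with (m + (Q1 + Q2 - j1) - Q2 - i)%nat by lia.
    replace (Q1 + Q2 - j1 - (i + Q2))%nat with (Q1 - j1 - i)%nat by lia.
    replace (m + (Q1 + Q2 - j1) - Q2 - i - (Q1 - j1 - i))%nat with (m + (Q1 + Q2 - j1) - (Q1 + Q2 - j1))%nat by lia.
    ring.
  -
    intros j2 H2. apply is_series_Reals.
    rewrite (p_eq_F p hp 0 j2) by (auto; lia).
    pose proof (F_series 0 j2 t ltac:(lia) ltac:(lia)) as Hs.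
    apply series_shift with (M := (Q1 + Q2 - j2)%nat) in Hs.
    2:{ intros n Hn. rewrite pi_b2 by lia. destruct (Nat.leb_spec (Q1 + (Q2 - j2)) n); [lia|]. ring. }
    eapply is_series_ext; [|exact Hs]. intros m. cbv beta.
    rewrite pi_b2 by lia. destruct (Nat.leb_spec (Q1 + (Q2 - j2)) (m + (Q1 + Q2 - j2))); [|lia].
    f_equal. unfold B2, Bsum, g.
    replace (Q1 + Q2 - j2 - Q1)%nat with (Q2 - j2)%nat by lia.
    apply sum_eq. intros i Hi. unfold h2.
    replace (i + Q1 - Q1)%nat with i by lia.
    replace (m + (Q1 + Q2 - j2) - (i + Q1))%nat with (m + (Q1 + Q2 - j2) - Q1 - i)%nat by lia.
    replace (Q1 + Q2 - j2 - (i + Q1))%nat with (Q2 - j2 - i)%nat by lia.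
    replace (m + (Q1 + Q2 - j2) - Q1 - i - (Q2 - j2 - i))%nat with (m + (Q1 + Q2 - j2) - (Q1 + Q2 - j2))%nat by lia.
    ring.
  -
    pose proof (state_sum_p_1 p t hp Ht) as Hsum.
    rewrite (state_sum_ext _ _ (fun j1 j2 => p j1 j2 t)
       (fun j1 j2 => (if Nat.eqb j1 0 && Nat.eqb j2 0 then 0 else p j1 j2 t)
                   + (if Nat.eqb j1 0 && Nat.eqb j2 0 then p j1 j2 t else 0))) in Hsum
      by (intros; destruct (_ && _); ring).
    rewrite state_sum_plus, state_sum_delta in Hsum.
    destruct (Nat.leb_spec 0 Q1), (Nat.leb_spec 0 Q2); try lia. cbn [andb] in Hsum. lra.
Qed.

End Chain.

Theorem theorem1 (Q1 Q2 : nat) (l1 l2 p12 p21 : R)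
  (p : nat -> nat -> R -> R)
  (hQ1 : (1 <= Q1)%nat) (hQ2 : (1 <= Q2)%nat)
  (hl1 : 0 < l1) (hl2 : 0 < l2)
  (hp12 : 0 <= p12 <= 1) (hp21 : 0 <= p21 <= 1)
  (hp : is_transient_distribution Q1 Q2 l1 l2 p12 p21 p) :
  let s := l1 + l2 in
  let s1 := l1 + l2 * p21 in
  let s2 := l2 + l1 * p12 in
  forall t, 0 <= t ->
  (* (a) *)
  (forall j1 j2, (1 <= j1 <= Q1)%nat -> (1 <= j2 <= Q2)%nat ->
     let N := (Q1 + Q2 - j1 - j2)%nat in
     p j1 j2 t = exp (- (s * t)) * (s * t) ^ N / INR (fact N)
                 * C N (Q1 - j1) * (l1 / s) ^ (Q1 - j1) * (l2 / s) ^ (Q2 - j2)) /\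
  (* (b) *)
  (forall j1, (1 <= j1 <= Q1)%nat ->
     let M := (Q1 + Q2 - j1)%nat in
     infinite_sum
       (fun m => let k := (m + M)%nat in
          exp (- (s * t)) * (s * t) ^ k / INR (fact k) *
          sum_f_R0 (fun i => let l := (i + Q2)%nat in
              C (l - 1) (Q2 - 1) * (l2 / s) ^ Q2 * (l1 / s) ^ (l - Q2)
              * C (k - l) (M - l) * (s1 / s) ^ (M - l)
              * ((s - s1) / s) ^ (k - M)) (M - Q2))
       (p j1 0%nat t)) /\
  (* (c) *)
  (forall j2, (1 <= j2 <= Q2)%nat ->
     let M := (Q1 + Q2 - j2)%nat in
     infinite_sum
       (fun m => let k := (m + M)%nat in
          exp (- (s * t)) * (s * t) ^ k / INR (fact k) *
          sum_f_R0 (fun i => let l := (i + Q1)%nat in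
              C (l - 1) (Q1 - 1) * (l1 / s) ^ Q1 * (l2 / s) ^ (l - Q1)
              * C (k - l) (M - l) * (s2 / s) ^ (M - l)
              * ((s - s2) / s) ^ (k - M)) (M - Q1))
       (p 0%nat j2 t)) /\
  (* (d) *)
  p 0%nat 0%nat t =
    1 - state_sum Q1 Q2 (fun j1 j2 =>
          if Nat.eqb j1 0 && Nat.eqb j2 0 then 0 else p j1 j2 t).
Proof.
  exact (main_in Q1 Q2 l1 l2 p12 p21 hl1 hl2 hp12 hp21 p hQ1 hQ2 hp).
Qed.
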